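(* Let $W$ be an irreducible euclidean Coxeter group not of type $\widetilde A_n$ and let $\sigma$ be a chamber of its Coxeter complex. Then the bipartite line of $\sigma$ is the axis (min-set) of each of the two bipartite Coxeter elements $w_1w_0$ and $w_0w_1$ produced by $\sigma$.
   Context: $W$ acts on a euclidean space $E$, generated by reflections in the facets of a euclidean simplex with dihedral angles submultiples of $\pi$, properly and cocompactly; chambers are images of the simplex. The diagram $\Gamma$ (a tree here) has a unique bipartition, giving a partition $S_0\sqcup S_1$ of the reflections in the facets of $\sigma$ into pairwise-commuting sets; $w_j$ is the product of the reflections in $S_j$; $F_j$ is the face of $\sigma$ cut out by the hyperplanes of the reflections in $S_j$ and $B_j$ is its affine hull. $B_0,B_1$ are disjoint and there is a unique pair of points $x_0\in B_0,x_1\in B_1$ realizing the distance between them; the bipartite line of $\sigma$ is the line through $x_0,x_1$. The min-set (axis) of an isometry is the set of points it moves the minimal distance. *)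

(* Defs.v *)
From HB Require Import structures.
From mathcomp Require Import all_boot all_order all_algebra.
From mathcomp Require Import fingroup perm classical_sets reals trigo.
Set Implicit Arguments. Unset Strict Implicit. Unset Printing Implicit Defensive.
Import Order.TTheory GRing.Theory Num.Theory.
Local Open Scope ring_scope.
Local Open Scope classical_set_scope.

Definition dotv (R : realType) (n : nat) (x y : 'rV[R]_n) : R := (x *m y^T) 0 0.
Definition normv (R : realType) (n : nat) (x : 'rV[R]_n) : R := Num.sqrt (dotv x x).

(* A euclidean simplex sigma in R^n with n+1 facets, described by its vertices
   v i and, for each facet i (the facet opposite v i), an outward unit normal
   u i and offset c i: the facet hyperplane H_i = {x | <u i, x> = c i} contains
   all v j (j <> i) and <u i, v i> < c i. *)
Definition is_simplex_data (R : realType) (n : nat)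
  (v u : 'I_n.+1 -> 'rV[R]_n) (c : 'I_n.+1 -> R) : Prop :=
  (forall i, dotv (u i) (u i) = 1) /\
  (forall i j, i != j -> dotv (u i) (v j) = c i) /\
  (forall i, dotv (u i) (v i) < c i).

Definition simplex (R : realType) (n : nat) (v : 'I_n.+1 -> 'rV[R]_n) : set 'rV[R]_n :=
  [set x | exists l : 'I_n.+1 -> R,
     (forall k, 0 <= l k) /\ \sum_k l k = 1 /\ x = \sum_k l k *: v k].

(* Dihedral angle between facets i, j (i <> j) equals pi / m i j: with outward
   unit normals this reads <u i, u j> = - cos (pi / m i j). *)
Definition dihedral_submultiples (R : realType) (n : nat)
  (u : 'I_n.+1 -> 'rV[R]_n) (m : 'I_n.+1 -> 'I_n.+1 -> nat) : Prop :=
  forall i j, i != j -> (2 <= m i j)%N /\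
    dotv (u i) (u j) = - cos (pi / (m i j)%:R).

Definition refl (R : realType) (n : nat) (u : 'I_n.+1 -> 'rV[R]_n)
  (c : 'I_n.+1 -> R) (i : 'I_n.+1) (x : 'rV[R]_n) : 'rV[R]_n :=
  x - (2 * (dotv (u i) x - c i)) *: u i.

Definition cox_edge (n : nat) (m : 'I_n.+1 -> 'I_n.+1 -> nat) : rel 'I_n.+1 :=
  fun i j => (i != j) && (3 <= m i j)%N.

Definition cox_irreducible (n : nat) (m : 'I_n.+1 -> 'I_n.+1 -> nat) : Prop :=
  forall i j, connect (cox_edge m) i j.

(* Type A~_n (n >= 2): the diagram is a cycle through all n+1 nodes with all
   labels 3 (all non-adjacent pairs have label 2). *)
Definition is_type_tildeA (n : nat) (m : 'I_n.+1 -> 'I_n.+1 -> nat) : Prop :=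
  exists p : {perm 'I_n.+1}, forall i j : 'I_n.+1, i != j ->
    m (p i) (p j) = (if (j == ordS i) || (i == ordS j) then 3 else 2)%N.

(* A bipartition S_false, S_true of the facets into sets of pairwise commuting
   reflections (m i j = 2 for distinct i, j in the same part). *)
Definition cox_bipartition (n : nat) (m : 'I_n.+1 -> 'I_n.+1 -> nat)
  (part : 'I_n.+1 -> bool) : Prop :=
  forall i j, i != j -> part i = part j -> m i j = 2%N.

(* w_b = product of the reflections in S_b (they commute). *)
Definition wprod (R : realType) (n : nat) (u : 'I_n.+1 -> 'rV[R]_n)
  (c : 'I_n.+1 -> R) (part : 'I_n.+1 -> bool) (b : bool) : 'rV[R]_n -> 'rV[R]_n :=
  foldr (fun i f => refl u c i \o f) id [seq i <- enum 'I_n.+1 | part i == b].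

Definition face (R : realType) (n : nat) (v u : 'I_n.+1 -> 'rV[R]_n)
  (c : 'I_n.+1 -> R) (part : 'I_n.+1 -> bool) (b : bool) : set 'rV[R]_n :=
  [set x | simplex v x /\ forall i, part i = b -> dotv (u i) x = c i].

Definition aff_hull (R : realType) (n : nat) (A : set 'rV[R]_n) : set 'rV[R]_n :=
  [set x | exists (k : nat) (p : 'I_k -> 'rV[R]_n) (l : 'I_k -> R),
     (forall t, A (p t)) /\ \sum_t l t = 1 /\ x = \sum_t l t *: p t].

Definition realizes_dist (R : realType) (n : nat) (A B : set 'rV[R]_n)
  (x0 x1 : 'rV[R]_n) : Prop :=
  A x0 /\ B x1 /\ forall y0 y1, A y0 -> B y1 -> normv (x0 - x1) <= normv (y0 - y1).

Definition line_through (R : realType) (n : nat) (x0 x1 : 'rV[R]_n) : set 'rV[R]_n :=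
  [set x | exists t : R, x = x0 + t *: (x1 - x0)].

Definition disp_minset (R : realType) (n : nat) (f : 'rV[R]_n -> 'rV[R]_n) : set 'rV[R]_n :=
  [set x | forall y, normv (f x - x) <= normv (f y - y)].

(* Main.v *)
Require Import Defs.
From HB Require Import structures.
From mathcomp Require Import all_boot all_order all_algebra.
From mathcomp Require Import fingroup perm classical_sets reals trigo.
From mathcomp Require Import ring lra.
Import Order.TTheory GRing.Theory Num.Theory.
Local Open Scope ring_scope.
Local Open Scope classical_set_scope.
Lemma sw4 (V : zmodType) (x y a b : V) : x - a - (y - b) = x - y - (a - b).
Proof. rewrite !opprB -!addrA; congr (_ + _); rewrite addrCA [RHS]addrCA; congr (_ + _); exact: addrC. Qed.

Lemma sw5 (V : zmodType) (q p x d : V) : q - p = d + ((q - (x + d)) - (p - x)).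
Proof. by rewrite opprD opprB !addrA addrC !addrA [_ - x - d]addrAC subrK [- p + d + q]addrAC addrK addrC. Qed.

Lemma sw6 (K : pzRingType) (V : lmodType K) (y a b : V) (k : K) :
  (y - k *: a) - (y - k *: b) = k *: ((y - a) - (y - b)).
Proof. by rewrite !opprB [LHS]addrC addrA subrK [y - a + _]addrC addrA subrK scalerBr. Qed.

Section Dot.
Variables (R : realType) (n : nat).
Implicit Types x y z : 'rV[R]_n.

Lemma dotvE x y : dotv x y = \sum_j x 0 j * y 0 j.
Proof. by rewrite /dotv mxE; apply: eq_bigr => j _; rewrite mxE. Qed.

Lemma dotvC x y : dotv x y = dotv y x.
Proof. by rewrite !dotvE; apply: eq_bigr => j _; rewrite mulrC. Qed.

Lemma dotvDl x y z : dotv (x + y) z = dotv x z + dotv y z.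
Proof. by rewrite !dotvE -big_split; apply: eq_bigr => j _; rewrite mxE mulrDl. Qed.

Lemma dotvZl a x y : dotv (a *: x) y = a * dotv x y.
Proof. by rewrite !dotvE mulr_sumr; apply: eq_bigr => j _; rewrite mxE mulrA. Qed.

Lemma dotvNl x y : dotv (- x) y = - dotv x y.
Proof. by rewrite -scaleN1r dotvZl mulN1r. Qed.

Lemma dotvBl x y z : dotv (x - y) z = dotv x z - dotv y z.
Proof. by rewrite dotvDl dotvNl. Qed.

Lemma dotv0l x : dotv 0 x = 0.
Proof. by rewrite -(scale0r 0) dotvZl mul0r. Qed.

Lemma dotvDr x y z : dotv x (y + z) = dotv x y + dotv x z.
Proof. by rewrite dotvC dotvDl !(dotvC x). Qed.
Lemma dotvZr a x y : dotv x (a *: y) = a * dotv x y.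
Proof. by rewrite dotvC dotvZl dotvC. Qed.
Lemma dotvNr x y : dotv x (- y) = - dotv x y.
Proof. by rewrite dotvC dotvNl dotvC. Qed.
Lemma dotvBr x y z : dotv x (y - z) = dotv x y - dotv x z.
Proof. by rewrite dotvDr dotvNr. Qed.
Lemma dotv0r x : dotv x 0 = 0.
Proof. by rewrite dotvC dotv0l. Qed.

Lemma dotv_suml (I : Type) (r : seq I) (P : pred I) (F : I -> 'rV[R]_n) y :
  dotv (\sum_(i <- r | P i) F i) y = \sum_(i <- r | P i) dotv (F i) y.
Proof.
elim/big_rec2: _ => [|i a b _ <-]; first by rewrite dotv0l.
by rewrite dotvDl.
Qed.

Lemma dotv_sumr (I : Type) (r : seq I) (P : pred I) (F : I -> 'rV[R]_n) y :
  dotv y (\sum_(i <- r | P i) F i) = \sum_(i <- r | P i) dotv y (F i).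
Proof.
rewrite dotvC dotv_suml; apply: eq_bigr => i _; by rewrite dotvC.
Qed.

Lemma dotv_ge0 x : 0 <= dotv x x.
Proof. by rewrite dotvE; apply: sumr_ge0 => j _; rewrite -expr2 sqr_ge0. Qed.

Lemma dotv_eq0 x : dotv x x = 0 -> x = 0.
Proof.
rewrite dotvE => /eqP; rewrite psumr_eq0; last by move=> j _; rewrite -expr2 sqr_ge0.
move=> /allP H; apply/rowP => j; rewrite mxE.
have := H j (mem_index_enum j); rewrite /= mulf_eq0 orbb => /eqP; done.
Qed.

Lemma normv_le x y : (normv x <= normv y) = (dotv x x <= dotv y y).
Proof. by rewrite /normv ler_sqrt // dotv_ge0. Qed.
End Dot.
Arguments dotvC {R n}.
Section Geo.
Variables (R : realType) (n : nat) (v u : 'I_n.+1 -> 'rV[R]_n) (c : 'I_n.+1 -> R).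
Hypothesis Hu1 : forall i, dotv (u i) (u i) = 1.
Hypothesis Huv : forall i j, i != j -> dotv (u i) (v j) = c i.
Hypothesis Hlt : forall i, dotv (u i) (v i) < c i.

Let g i := c i - dotv (u i) (v i).
Lemma g_gt0 i : 0 < g i. Proof. by rewrite /g subr_gt0. Qed.
Lemma g_neq0 i : g i != 0. Proof. by rewrite gt_eqF ?g_gt0. Qed.

Lemma uv i k : dotv (u i) (v k) = c i - g i * (i == k)%:R.
Proof.
case: eqP => [->|/eqP ik]; first by rewrite mulr1 /g opprB addrC subrK.
by rewrite mulr0 subr0 Huv.
Qed.

Lemma sum_ind (a : 'I_n.+1) (F : 'I_n.+1 -> R) : \sum_k F k * (k == a)%:R = F a.
Proof.
by rewrite (bigD1 a) //= eqxx mulr1 big1 ?addr0 // => k /negbTE ->; rewrite mulr0.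
Qed.

Lemma udiff j k : k != ord0 ->
  dotv (u j) (v k - v ord0) = g j * ((j == ord0)%:R - (j == k)%:R).
Proof.
move=> k0; rewrite dotvBr !uv; ring.
Qed.

Definition Umx : 'M[R]_n := \matrix_(k, j) u (lift ord0 k) 0 j.
Definition Vmx : 'M[R]_n :=
  \matrix_(k, j) ((- (g (lift ord0 k))^-1) *: (v (lift ord0 k) - v ord0)) 0 j.

Lemma UV1 : Umx *m Vmx^T = 1%:M.
Proof.
apply/matrixP => k m; rewrite !mxE.
transitivity (dotv (u (lift ord0 k)) ((- (g (lift ord0 m))^-1) *: (v (lift ord0 m) - v ord0))).
  by rewrite dotvE; apply: eq_bigr => j _; rewrite !mxE.
rewrite dotvZr udiff ?neq_lift // eq_sym (negbTE (neq_lift _ _)) (inj_eq (@lift_inj _ ord0)).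
case: eqP => [->|_] /=.
  by rewrite sub0r mulrN1 mulrNN mulVf // g_neq0.
by rewrite subrr !mulr0.
Qed.
Lemma U_span y : (forall k, k != ord0 -> dotv (u k) y = 0) -> y = 0.
Proof.
move=> H; have [Uu _] := mulmx1_unit UV1.
have : Umx *m y^T = 0.
  apply/matrixP => k i; rewrite ord1 [RHS]mxE.
  transitivity (dotv (u (lift ord0 k)) y); last by rewrite H // neq_lift.
  by rewrite dotvE !mxE; apply: eq_bigr => j _; rewrite !mxE.
move=> /(congr1 (mulmx (invmx Umx))); rewrite mulKmx // mulmx0 => /eqP.
by rewrite -trmx0 (inj_eq (@trmx_inj _ _ _)) => /eqP.
Qed.

Lemma V_span w : (forall k, k != ord0 -> dotv w (v k - v ord0) = 0) -> w = 0.
Proof.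
move=> H; have [_ Vu] := mulmx1_unit UV1.
move: Vu; rewrite unitmx_tr => Vu.
have : Vmx *m w^T = 0.
  apply/matrixP => k i; rewrite ord1 [RHS]mxE mxE.
  transitivity (dotv ((- (g (lift ord0 k))^-1) *: (v (lift ord0 k) - v ord0)) w).
    by rewrite dotvE; apply: eq_bigr => j _; rewrite !mxE.
  by rewrite dotvZl dotvC H ?neq_lift // mulr0.
move=> /(congr1 (mulmx (invmx Vmx))); rewrite mulKmx // mulmx0 => /eqP.
by rewrite -trmx0 (inj_eq (@trmx_inj _ _ _)) => /eqP.
Qed.


Lemma sum_ind1 (a : 'I_n.+1) : \sum_k ((k == a)%:R : R) = 1.
Proof. by rewrite (bigD1 a) //= eqxx big1 ?addr0 // => k /negbTE ->. Qed.

Lemma zsum : \sum_k (g k)^-1 *: u k = 0.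
Proof.
apply: V_span => k k0; rewrite dotv_suml.
transitivity (\sum_j (((j == ord0)%:R : R) - (j == k)%:R)).
  by apply: eq_bigr => j _; rewrite dotvZl udiff // mulKf ?g_neq0.
by rewrite sumrB !sum_ind1 subrr.
Qed.

Definition lam x k := (c k - dotv (u k) x) / g k.

Lemma lam_v j k : lam (v j) k = (k == j)%:R.
Proof. by rewrite /lam uv opprB addrC subrK mulrC mulKf ?g_neq0. Qed.

Lemma lam_sum x : \sum_k lam x k = 1.
Proof.
have -> : \sum_k lam x k = \sum_k lam (v ord0) k + dotv (\sum_k (g k)^-1 *: u k) (v ord0 - x).
  rewrite dotv_suml -big_split /=; apply: eq_bigr => k _.
  rewrite /lam dotvZl dotvBr; field; exact: g_neq0.
by rewrite zsum dotv0l addr0; under eq_bigr => k _ do rewrite lam_v; rewrite sum_ind1.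
Qed.

Lemma dot_comb (mu : 'I_n.+1 -> R) i : \sum_k mu k = 1 ->
  dotv (u i) (\sum_k mu k *: v k) = c i - g i * mu i.
Proof.
move=> Hs; rewrite dotv_sumr.
under eq_bigr => k _ do rewrite dotvZr uv mulrBr.
rewrite sumrB -mulr_suml Hs mul1r; congr (_ - _).
rewrite -(sum_ind i (fun k => g i * mu k)); apply: eq_bigr => k _.
by rewrite eq_sym; ring.
Qed.

Lemma bary x : x = \sum_k lam x k *: v k.
Proof.
apply/eqP; rewrite -subr_eq0; apply/eqP; apply: U_span => k _.
rewrite dotvBr dot_comb ?lam_sum // /lam; field; exact: g_neq0.
Qed.

Lemma relation (gam : 'I_n.+1 -> R) : \sum_k gam k *: u k = 0 ->
  forall k, gam k * g k = gam ord0 * g ord0.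
Proof.
move=> H k; have [->|k0] := eqVneq k ord0; first by [].
have := congr1 (fun w => dotv w (v k - v ord0)) H; rewrite /= dotv0l dotv_suml.
under eq_bigr => j _ do rewrite dotvZl udiff // mulrA mulrBr.
rewrite sumrB (sum_ind ord0 (fun j => gam j * g j)) (sum_ind k (fun j => gam j * g j)).
by move=> /eqP; rewrite subr_eq0 => /eqP ->.
Qed.


Variable part : 'I_n.+1 -> bool.
Hypothesis Horth : forall i j, i != j -> part i = part j -> dotv (u i) (u j) = 0.

Lemma ON b i (al : 'I_n.+1 -> R) : part i = b ->
  dotv (u i) (\sum_(j | part j == b) al j *: u j) = al i.
Proof.
move=> pi; rewrite dotv_sumr (bigD1 i) /= ?pi ?eqxx //.
rewrite big1 ?addr0; first by rewrite dotvZr Hu1 mulr1.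
move=> j /andP [/eqP pj ji]; rewrite dotvZr Horth ?mulr0 //; first by rewrite eq_sym.
by rewrite pi pj.
Qed.

Definition delta b x := \sum_(i | part i == b) (dotv (u i) x - c i) *: u i.

Lemma foldr_refl b (s : seq 'I_n.+1) x : uniq s -> all (fun j => part j == b) s ->
  foldr (fun i f => refl u c i \o f) id s x =
  x - 2 *: \sum_(i <- s) (dotv (u i) x - c i) *: u i.
Proof.
elim: s => [|i s IH] /=; first by rewrite big_nil scaler0 subr0.
move=> /andP [nis us] /andP [/eqP pi As]; rewrite IH // big_cons /refl.
have -> : dotv (u i) (x - 2 *: \sum_(j <- s) (dotv (u j) x - c j) *: u j) = dotv (u i) x.
  rewrite dotvBr dotvZr dotv_sumr big_seq big1 ?mulr0 ?subr0 // => j js.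
  rewrite dotvZr Horth ?mulr0 //.
    by apply: contraNneq nis => ->.
  by move/allP: As => /(_ j js) /eqP ->.
by rewrite scalerDr scalerA opprD addrA addrAC.
Qed.

Lemma wprodE b x : wprod u c part b x = x - 2 *: delta b x.
Proof.
rewrite /wprod (foldr_refl b); last 2 first; [exact: filter_uniq (enum_uniq _) | exact: filter_all |].
by rewrite big_filter big_enum_cond /delta; congr (_ - 2 *: _); apply: eq_bigl.
Qed.

Lemma delta_on b x i : part i = b -> dotv (u i) (delta b x) = dotv (u i) x - c i.
Proof. exact: ON. Qed.

Definition Hs b x := forall i, part i = b -> dotv (u i) x = c i.

Lemma P_H b x : Hs b (x - delta b x).
Proof. by move=> i pi; rewrite dotvBr delta_on //; ring. Qed.

Lemma deltaB b x y : delta b x - delta b y = \sum_(i | part i == b) dotv (u i) (x - y) *: u i.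
Proof.
rewrite /delta -sumrB; apply: eq_bigr => i _; rewrite -scalerBl dotvBr; congr (_ *: _); ring.
Qed.

Lemma w_isom b x y :
  dotv (wprod u c part b x - wprod u c part b y) (wprod u c part b x - wprod u c part b y)
  = dotv (x - y) (x - y).
Proof.
rewrite !wprodE.
have -> : x - 2 *: delta b x - (y - 2 *: delta b y) = (x - y) - 2 *: (delta b x - delta b y).
  by rewrite scalerBr sw4.
rewrite deltaB; set h := x - y; set L := \sum_(i | part i == b) _.
have hL : dotv h L = \sum_(i | part i == b) dotv (u i) h ^+ 2.
  by rewrite dotv_sumr; apply: eq_bigr => i _; rewrite dotvZr dotvC expr2.
have LL : dotv L L = \sum_(i | part i == b) dotv (u i) h ^+ 2.
  rewrite {1}/L dotv_suml; apply: eq_bigr => i /eqP pi.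
  by rewrite dotvZl ON // expr2.
clearbody L h. rewrite !(dotvBl, dotvBr, dotvZl, dotvZr) (dotvC L h) hL LL; ring.
Qed.

Lemma w_invol b y : wprod u c part b (wprod u c part b y) = y.
Proof.
rewrite !wprodE.
have -> : delta b (y - 2 *: delta b y) = - delta b y.
  rewrite {1}/delta [in RHS]/delta -sumrN; apply: eq_bigr => i /eqP pi.
  rewrite dotvBr dotvZr delta_on // -scaleNr; congr (_ *: _); ring.
by rewrite scalerN opprK subrK.
Qed.


Hypothesis Hne : forall b, exists j, part j = b.

Lemma sum_split (F : 'I_n.+1 -> 'rV[R]_n) :
  \sum_k F k = \sum_(k | part k == false) F k + \sum_(k | part k == true) F k.
Proof.
rewrite (bigID (fun k => part k == false)) /=; congr (_ + _); apply: eq_bigl => k.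
by case: (part k).
Qed.

Definition z b := \sum_(k | part k == b) (g k)^-1 *: u k.
Lemma z01 : z false = - z true.
Proof. by apply/eqP; rewrite -addr_eq0 /z -sum_split zsum. Qed.

Definition Q := \sum_(k | part k == true) (g k)^-1 ^+ 2.
Lemma Q_gt0 : 0 < Q.
Proof.
have [j pj] := Hne true.
rewrite /Q (bigD1 j) /= ?pj //; apply: ltr_pwDl.
  by rewrite exprn_gt0 // invr_gt0 g_gt0.
by apply: sumr_ge0 => k _; rewrite sqr_ge0.
Qed.
Lemma Q_neq0 : Q != 0. Proof. by rewrite gt_eqF // Q_gt0. Qed.

Definition mu k := if part k == true then Q^-1 * (g k)^-1 ^+ 2 else 0.
Lemma mu_sum : \sum_k mu k = 1.
Proof.
rewrite /mu -big_mkcond /= -mulr_sumr mulVf //; exact: Q_neq0.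
Qed.

Definition X0 := \sum_k mu k *: v k.
Definition D := Q^-1 *: z true.
Definition X1 := X0 + D.

Lemma uX0 i : dotv (u i) X0 = c i - (if part i then Q^-1 * (g i)^-1 else 0).
Proof.
rewrite dot_comb ?mu_sum // /mu; case: (part i) => //=; last by rewrite mulr0.
congr (_ - _); field; by rewrite g_neq0 Q_neq0.
Qed.

Lemma uD i : dotv (u i) D = (if part i then Q^-1 * (g i)^-1 else - (Q^-1 * (g i)^-1)).
Proof.
rewrite /D dotvZr; case pi: (part i).
  by rewrite /z ON.
by rewrite -[z true]opprK -z01 dotvNr /z ON // mulrN.
Qed.

Lemma H0X0 : Hs false X0.
Proof. by move=> i pi; rewrite uX0 pi subr0. Qed.
Lemma H1X1 : Hs true X1.
Proof. by move=> i pi; rewrite /X1 dotvDr uX0 uD pi subrK. Qed.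

Lemma Dz0 : D = - Q^-1 *: z false.
Proof. by rewrite z01 scalerN scaleNr opprK. Qed.

Lemma perp0 p : Hs false p -> dotv D (p - X0) = 0.
Proof.
move=> Hp; rewrite Dz0 dotvZl /z dotv_suml big1 ?mulr0 // => i /eqP pi.
by rewrite dotvZl dotvBr Hp // H0X0 // subrr mulr0.
Qed.
Lemma perp1 q : Hs true q -> dotv D (q - X1) = 0.
Proof.
move=> Hq; rewrite /D dotvZl /z dotv_suml big1 ?mulr0 // => i /eqP pi.
by rewrite dotvZl dotvBr Hq // H1X1 // subrr mulr0.
Qed.

Definition E p q := (q - X1) - (p - X0).

Lemma KI p q : Hs false p -> Hs true q ->
  dotv (q - p) (q - p) = dotv D D + dotv (E p q) (E p q).
Proof.
move=> Hp Hq.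
have -> : q - p = D + E p q.
  by rewrite /E /X1 (sw5 _ q p X0 D).
have DE : dotv D (E p q) = 0 by rewrite /E dotvBr perp0 // perp1 // subrr.
move: (E p q) DE => e DE; rewrite dotvDl !dotvDr DE (dotvC e) DE; ring.
Qed.

Lemma EQ p q : Hs false p -> Hs true q -> E p q = 0 -> p = X0 /\ q = X1.
Proof.
move=> Hp Hq /eqP; rewrite /E subr_eq0 => /eqP e.
have f0 : p - X0 = 0.
  apply: U_span => k _; case pk: (part k).
    by rewrite -e dotvBr Hq // H1X1 // subrr.
  by rewrite dotvBr Hp // H0X0 // subrr.
split; apply/eqP; rewrite -subr_eq0; apply/eqP; [exact: f0 | by rewrite e].
Qed.


Definition Pb b y := y - delta b y.

Lemma tD t : t *: D = \sum_(i | part i == true) (t * (Q^-1 * (g i)^-1)) *: u i.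
Proof. by rewrite /D /z !scaler_sumr; apply: eq_bigr => i _; rewrite !scalerA; congr (_ *: _); ring. Qed.

Lemma tD0 t : t *: D = \sum_(i | part i == false) (t * - (Q^-1 * (g i)^-1)) *: u i.
Proof. by rewrite Dz0 /z !scaler_sumr; apply: eq_bigr => i _; rewrite !scalerA; congr (_ *: _); ring. Qed.

Lemma line_bwd t : Pb false (X0 + t *: D) = X0 /\ Pb true (X0 + t *: D) = X1.
Proof.
split; rewrite /Pb.
  have -> : delta false (X0 + t *: D) = t *: D.
    rewrite [RHS]tD0 /delta; apply: eq_bigr => i /eqP pi; congr (_ *: _).
    by rewrite dotvDr dotvZr uX0 uD pi; ring.
  by rewrite addrK.
have -> : delta true (X0 + t *: D) = (t - 1) *: D.
  rewrite [RHS]tD /delta; apply: eq_bigr => i /eqP pi; congr (_ *: _).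
  by rewrite dotvDr dotvZr uX0 uD pi; ring.
by rewrite /X1 scalerBl scale1r opprB -addrA [t *: D + _]addrC subrK.
Qed.

Lemma line_fwd y : Pb false y = X0 -> Pb true y = X1 -> exists t, y = X0 + t *: D.
Proof.
rewrite /Pb => e0 e1.
pose al k := dotv (u k) y - c k.
pose gam k := if part k then - (al k + Q^-1 * (g k)^-1) else al k.
have Hg : \sum_k gam k *: u k = 0.
  rewrite sum_split.
  have -> : \sum_(k | part k == false) gam k *: u k = delta false y.
    by apply: eq_bigr => k /eqP pk; rewrite /gam pk.
  have -> : \sum_(k | part k == true) gam k *: u k = - (delta true y + 1 *: D).
    rewrite tD /delta -big_split -sumrN /=; apply: eq_bigr => k /eqP pk.
    by rewrite /gam pk -scalerDl -scaleNr mul1r.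
  have d0 : delta false y = y - X0 by rewrite -e0 opprB addrC subrK.
  have d1 : delta true y = y - X1 by rewrite -e1 opprB addrC subrK.
  by rewrite d0 d1 scale1r /X1 (opprD X0 D) (addrA y) subrK subrr.
have R0 := @relation gam Hg.
set K := gam ord0 * g ord0 in R0.
exists (- (K * Q)).
have d0 : delta false y = - (K * Q) *: D.
  rewrite Dz0 scalerA /z scaler_sumr /delta; apply: eq_bigr => k /eqP pk.
  rewrite scalerA; congr (_ *: _).
  have := R0 k; rewrite /gam pk -/(al k) => <-.
  by field; rewrite g_neq0 Q_neq0.
by rewrite -d0 -e0 subrK.
Qed.

Definition Ey y := E (Pb false y) (Pb true y).

Lemma Ey_line t : Ey (X0 + t *: D) = 0.
Proof. by rewrite /Ey; have [-> ->] := line_bwd t; rewrite /E !subrr ?subr0. Qed.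

Lemma disp01 y : let w0 := wprod u c part false in let w1 := wprod u c part true in
  dotv (w1 (w0 y) - y) (w1 (w0 y) - y) = 4 * (dotv D D + dotv (Ey y) (Ey y)) /\
  dotv (w0 (w1 y) - y) (w0 (w1 y) - y) = 4 * (dotv D D + dotv (Ey y) (Ey y)).
Proof.
rewrite /=.
have K := @KI _ _ (P_H false y) (P_H true y).
have e : wprod u c part true y - wprod u c part false y = 2 *: (Pb true y - Pb false y).
  by rewrite !wprodE sw6.
split.
  rewrite -{2 4}(w_invol true y) w_isom -opprB dotvNl dotvNr opprK e.
  by rewrite dotvZl dotvZr K; ring.
rewrite -{2 4}(w_invol false y) w_isom e.
by rewrite dotvZl dotvZr K; ring.
Qed.


Lemma X1X0 : X1 - X0 = D.
Proof. by rewrite /X1 addrC addKr. Qed.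

Lemma Ey0_line y : Ey y = 0 -> exists t, y = X0 + t *: D.
Proof.
move=> H; have [e0 e1] := @EQ _ _ (P_H false y) (P_H true y) H.
exact: line_fwd.
Qed.

Lemma minset_line (f : 'rV[R]_n -> 'rV[R]_n) :
  (forall y, dotv (f y - y) (f y - y) = 4 * (dotv D D + dotv (Ey y) (Ey y))) ->
  disp_minset f = line_through X0 X1.
Proof.
move=> Hf; apply/seteqP; split => y /=.
  move=> /(_ (X0 + 0 *: D)); rewrite normv_le !Hf Ey_line dotv0l addr0.
  rewrite ler_pM2l // -[X in _ <= X]addr0 lerD2l => Hle.
  have /dotv_eq0 E0 : dotv (Ey y) (Ey y) = 0.
    by apply/eqP; rewrite eq_le Hle dotv_ge0.
  have [t ->] := @Ey0_line y E0.
  by exists t; rewrite X1X0.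
move=> [t ->] y'; rewrite X1X0 normv_le !Hf Ey_line dotv0l addr0.
by rewrite ler_pM2l // lerDl dotv_ge0.
Qed.

Lemma vertex_face b j : part j != b -> face v u c part b (v j).
Proof.
move=> pj; split.
  exists (fun k => (k == j)%:R); split; first by move=> k; rewrite ler0n.
  split; first by rewrite (sum_ind1 j).
  rewrite (bigD1 j) //= eqxx scale1r big1 ?addr0 // => k /negbTE ->.
  by rewrite scale0r.
move=> i pi; apply: Huv; apply: contraNneq pj => <-; by rewrite pi.
Qed.

Lemma B_eq b : aff_hull (face v u c part b) = Hs b.
Proof.
apply/seteqP; split => x /=.
  move=> [k [p [l [Hp [Hl ->]]]]] i pi.
  rewrite dotv_sumr; under eq_bigr => t _ do rewrite dotvZr (proj2 (Hp t) i pi).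
  by rewrite -mulr_suml Hl mul1r.
move=> Hx.
have [j0 pj0] := Hne (~~ b).
exists n.+1, (fun t => if part t == b then v j0 else v t), (lam x).
split.
  move=> t; case: eqP => [_|/eqP pt]; apply: vertex_face => //.
  by rewrite pj0; case: b {Hx pj0}.
split; first exact: lam_sum.
rewrite {1}(bary x); apply: eq_bigr => t _; case: eqP => // /eqP pt.
have -> : lam x t = 0 by rewrite /lam Hx ?subrr ?mul0r //; apply/eqP.
by rewrite !scale0r.
Qed.


Lemma negD_sq (a b : 'rV[R]_n) : dotv (a - b) (a - b) = dotv (b - a) (b - a).
Proof. by rewrite -opprB dotvNl dotvNr opprK. Qed.

Lemma main_in :
  let B0 := aff_hull (face v u c part false) in
  let B1 := aff_hull (face v u c part true) in
  let w0 := wprod u c part false in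
  let w1 := wprod u c part true in
  (exists x0 x1, realizes_dist B0 B1 x0 x1) /\
  (forall x0 x1, realizes_dist B0 B1 x0 x1 ->
     x0 != x1 /\
     disp_minset (w1 \o w0) = line_through x0 x1 /\
     disp_minset (w0 \o w1) = line_through x0 x1).
Proof.
move=> B0 B1 w0 w1; rewrite /B0 /B1 (B_eq false) (B_eq true).
have DD : dotv (X0 - X1) (X0 - X1) = dotv D D by rewrite negD_sq X1X0.
split.
  exists X0, X1; split; first exact: H0X0; split; first exact: H1X1.
  move=> y0 y1 H0 H1; rewrite normv_le DD negD_sq (@KI y0 y1) //.
  by rewrite lerDl dotv_ge0.
move=> x0 x1 [H0 [H1 Hmin]].
have := Hmin X0 X1 H0X0 H1X1; rewrite normv_le DD negD_sq (@KI x0 x1) //.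
rewrite -[X in _ <= X]addr0 lerD2l => Hle.
have /dotv_eq0 E0 : dotv (E x0 x1) (E x0 x1) = 0.
  by apply/eqP; rewrite eq_le Hle dotv_ge0.
have [-> ->] := @EQ x0 x1 H0 H1 E0.
split.
  apply/eqP => h; have [j pj] := Hne true; have := uD j.
  rewrite pj -X1X0 -h subrr dotv0r => /eqP; rewrite eq_sym mulf_eq0 !invr_eq0.
  by rewrite (negbTE Q_neq0) (negbTE (g_neq0 j)).
split; apply: minset_line => y.
  exact: (proj1 (disp01 y)).
exact: (proj2 (disp01 y)).
Qed.

End Geo.

Theorem proposition8p8 (R : realType) (n : nat)
  (v u : 'I_n.+1 -> 'rV[R]_n) (c : 'I_n.+1 -> R)
  (m : 'I_n.+1 -> 'I_n.+1 -> nat) (part : 'I_n.+1 -> bool) :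
  (2 <= n)%N ->
  is_simplex_data v u c ->
  dihedral_submultiples u m ->
  cox_irreducible m ->
  ~ is_type_tildeA m ->
  cox_bipartition m part ->
  let B0 := aff_hull (face v u c part false) in
  let B1 := aff_hull (face v u c part true) in
  let w0 := wprod u c part false in
  let w1 := wprod u c part true in
  (exists x0 x1, realizes_dist B0 B1 x0 x1) /\
  (forall x0 x1, realizes_dist B0 B1 x0 x1 ->
     x0 != x1 /\
     disp_minset (w1 \o w0) = line_through x0 x1 /\
     disp_minset (w0 \o w1) = line_through x0 x1).
Proof.
move=> n2 [Hu1 [Huv Hlt]] Hdih Hirr _ Hbip.
have Horth : forall i j, i != j -> part i = part j -> dotv (u i) (u j) = 0.
  move=> i j ij pij; have [_ ->] := Hdih i j ij.
  by rewrite (Hbip i j ij pij) cos_pihalf oppr0.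
have Hne : forall b, exists j, part j = b.
  move=> b; case: (boolP [exists j, part j == b]) => [/existsP [j /eqP pj]|]; first by exists j.
  move=> /existsPn Hn; exfalso.
  have allsame : forall i j, part i = part j.
    move=> i j; move: (Hn i) (Hn j); clear Hn; by case: (part i); case: (part j); case: b.
  have noedge : forall i j, cox_edge m i j = false.
    move=> i j; rewrite /cox_edge; case: eqP => //= /eqP ij.
    by rewrite (Hbip i j ij (allsame i j)).
  have /connectP [p Hp Hl] := Hirr ord0 ord_max.
  case: p Hp Hl => [_ /= /(congr1 val) /= H|a p /= /andP [] ]; last by rewrite noedge.
  by move: n2; rewrite H.
exact: (@main_in R n v u c Hu1 Huv Hlt part Horth Hne).
Qed.
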